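(* Let $d\ge2$, let $A$ be a symmetric positive definite real $d\times d$ matrix and $G$ an arbitrary real $d\times d$ matrix. Then there exists a real symmetric $d\times d$ matrix $S$ with $SG+G^TS=2SAS$ and $\mathrm{trace}(G-AS)=0$. *)

(* Defs.v *)
From mathcomp Require Import all_boot all_order all_algebra.
From mathcomp Require Import reals.
Set Implicit Arguments. Unset Strict Implicit. Unset Printing Implicit Defensive.
Import GRing.Theory Num.Theory.
Local Open Scope ring_scope.

Definition posdefmx (R : realType) (n : nat) (M : 'M[R]_n) : Prop :=
  M \is symmetricmx /\ forall x : 'cV[R]_n, x != 0 -> 0 < (x^T *m M *m x) ord0 ord0.

(* Main.v *)
Require Import Defs.
From mathcomp Require Import all_boot all_order all_algebra.
From mathcomp Require Import reals.
From mathcomp Require Import ring lra.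
From mathcomp Require Import boolp classical_sets topology normedtype sequences.
Set Implicit Arguments. Unset Strict Implicit.
Import Order.TTheory GRing.Theory Num.Theory.
Import numFieldNormedType.Exports.
Local Open Scope classical_set_scope.
Local Open Scope ring_scope.

Section S1.
Variable R : realType.
Variable d : nat.

Lemma symP (M : 'M[R]_d) : M \is symmetricmx <-> M^T = M.
Proof.
rewrite is_hermitianmxE expr0 scale1r map_mx_id; split.
  by move/eqP => {2}->.
by move=> h; apply/eqP; rewrite h.
Qed.

Definition Mop (H : 'M[R]_d) : 'M[R]_(d * d) := lin_mulmx H + lin_mulmxr H^T.

Lemma MopP (H X : 'M[R]_d) : mxvec X *m Mop H = mxvec (H *m X + X *m H^T).
Proof.
by rewrite mulmxDr /lin_mulmx /lin_mulmxr !mul_vec_lin linearD.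
Qed.

Lemma lyap_sol (A H : 'M[R]_d) : posdefmx A -> \det (Mop H) != 0 ->
  exists S : 'M[R]_d, S \is symmetricmx /\
    S *m H + H^T *m S = 2%:R *: (S *m A *m S) /\ \tr (A *m S) = \tr H.
Proof.
move=> [/symP Asym Apos] detM.
have Mu : Mop H \in unitmx by rewrite unitmxE unitfE.
set P0 := vec_mx (mxvec A *m invmx (Mop H)).
have eP0 : H *m P0 + P0 *m H^T = A.
  apply: (can_inj (@mxvecK _ _ _)); rewrite -MopP /P0 vec_mxK mulmxKV //.
set P := P0 + P0^T.
have Psym : P^T = P by rewrite /P linearD /= trmxK addrC.
have eP : H *m P + P *m H^T = 2%:R *: A.
  rewrite /P mulmxDr mulmxDl addrACA eP0.
  have -> : H *m P0^T + P0^T *m H^T = A.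
    by rewrite -[H in H *m _]trmxK -trmx_mul -trmx_mul -linearD addrC /= eP0 Asym.
  by rewrite scaler_nat mulr2n.
have Pu : P \in unitmx.
  rewrite unitmxE unitfE; apply/negP => /det0P [v vn0 vP].
  have Pv : P *m v^T = 0 by rewrite -Psym -trmx_mul vP trmx0.
  have := Apos v^T; rewrite trmx_eq0 vn0 trmxK => /(_ isT).
  have : v *m (H *m P + P *m H^T) *m v^T = 0.
    by rewrite mulmxDr mulmxDl !mulmxA vP !mul0mx -!mulmxA Pv !mulmx0 addr0.
  rewrite eP -scalemxAr -scalemxAl => /matrixP /(_ ord0 ord0).
  rewrite !mxE => /eqP; rewrite mulf_eq0 pnatr_eq0 /= => /eqP ->.
  by rewrite Order.POrderTheory.ltxx.
exists (invmx P); split; first by apply/symP; rewrite trmx_inv Psym.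
split.
  have := congr1 (fun X => invmx P *m X *m invmx P) eP.
  rewrite mulmxDr mulmxDl !mulmxA mulmxK // -!mulmxA mulKmx // => ->.
  by rewrite scalemxAr scalemxAl !mulmxA.
have := congr1 (fun X => \tr (invmx P *m X)) eP.
rewrite /= mulmxDr [invmx P *m (P *m _)]mulmxA mulVmx // mul1mx mxtraceD.
rewrite mxtrace_mulC -mulmxA mulmxV // mulmx1.
rewrite mxtrace_tr -scalemxAr mxtraceZ mxtrace_mulC -mulr2n => h.
by apply: (@mulfI _ 2%:R); rewrite ?pnatr_eq0 // -h mulr_natl.
Qed.

Lemma Mop_shift (G : 'M[R]_d) e : Mop (G + e%:M) = Mop G + (e *+ 2)%:M.
Proof.
apply/row_matrixP => i.
rewrite -(mul1mx (Mop (G + _))) -(mul1mx (Mop G + _)) !row_mul.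
move: (row i 1%:M) => u.
rewrite -[u]vec_mxK MopP mulmxDr MopP mul_mx_scalar -linearZ /= -linearD /=.
congr mxvec.
rewrite mulmxDl linearD /= mulmxDr tr_scalar_mx mul_scalar_mx mul_mx_scalar.
by rewrite mulr2n scalerDl addrACA.
Qed.

Lemma char_poly_eval m (N : 'M[R]_m) t : (char_poly N).[t] = \det (t%:M - N).
Proof.
rewrite -horner_evalE -det_map_mx; congr (\det _).
by apply/matrixP => i j; rewrite !mxE /= horner_evalE hornerD hornerN hornerMn hornerX hornerC.
Qed.

Lemma good_eps m (N : 'M[R]_m) (del : R) : 0 < del ->
  exists e, [/\ 0 < e, e <= del & \det (N + e%:M) != 0].
Proof.
move=> del0.
set p := char_poly (- N).
have pn0 : p != 0 by rewrite monic_neq0 // char_poly_monic.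
set s := [seq del / (k.+1)%:R | k <- iota 0 (size p)].
have us : uniq s.
  rewrite map_inj_uniq ?iota_uniq // => a b /= h.
  have : (a.+1)%:R^-1 = (b.+1)%:R^-1 :> R.
    exact: (mulfI (negbT (gt_eqF del0))).
  by move/invr_inj/eqP; rewrite eqr_nat eqSS => /eqP.
have : ~~ all (root p) s.
  apply/negP => hall; have := max_poly_roots pn0 hall us.
  by rewrite size_map size_iota ltnn.
case/allPn => e /mapP [k _ ->] hr.
exists (del / (k.+1)%:R); split.
- by rewrite divr_gt0 // ltr0Sn.
- rewrite ler_pdivrMr ?ltr0Sn // (ler_peMr (ltW del0)) //; try by rewrite (ler_nat _ 1).
- by move: hr; rewrite /root char_poly_eval opprK addrC.
Qed.
End S1.

Section S2.
Variable R : realType.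
Variable d : nat.
Implicit Types (A : 'M[R]_d) (u v : 'cV[R]_d).

Definition Fm A u v : R := (u^T *m A *m v) ord0 ord0.

Lemma F_sym A u v : A^T = A -> Fm A u v = Fm A v u.
Proof.
move=> hA; rewrite /Fm.
have -> : (u^T *m A *m v) ord0 ord0 = (u^T *m A *m v)^T ord0 ord0 by rewrite [in RHS]mxE.
by rewrite !trmx_mul trmxK hA mulmxA.
Qed.

Lemma F_expand A u v t : Fm A (u - t *: v) (u - t *: v) =
  Fm A u u - t * Fm A u v - t * Fm A v u + t ^+ 2 * Fm A v v.
Proof.
rewrite /Fm.
have -> : (u - t *: v)^T = u^T - t *: v^T by rewrite linearB linearZ.
rewrite !(mulmxBl, mulmxBr) -!scalemxAl -!scalemxAr -?scalemxAl.
rewrite !mxE; ring.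
Qed.

Lemma F0r A u : Fm A u 0 = 0.
Proof. by rewrite /Fm mulmx0 mxE. Qed.

Lemma CS A u v : A^T = A -> (forall w, 0 <= Fm A w w) ->
  (forall w, w != 0 -> 0 < Fm A w w) ->
  Fm A u v ^+ 2 <= Fm A u u * Fm A v v.
Proof.
move=> hA hnn hp.
have [->|vn0] := eqVneq v 0; first by rewrite F0r expr0n /= F0r mulr0.
have a0 := hp _ vn0.
have := hnn (u - (Fm A u v / Fm A v v) *: v).
rewrite F_expand (F_sym u v hA).
set c := Fm A v u; set a := Fm A v v; set b := Fm A u u => h.
have : 0 <= a * (b - c / a * c - c / a * c + (c / a) ^+ 2 * a).
  by rewrite mulr_ge0 // ltW.
have -> : a * (b - c / a * c - c / a * c + (c / a) ^+ 2 * a) = a * b - c ^+ 2.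
  by field; rewrite gt_eqF.
by rewrite subr_ge0 mulrC.
Qed.



Lemma sqr_normr (x : R) : `|x| ^+ 2 = x ^+ 2.
Proof. exact: real_normK (num_real x). Qed.

Definition Qm A (y : 'I_d -> R) : R := \sum_i \sum_j y i * A i j * y j.

Lemma FQ A y : Fm A (\col_i y i) (\col_i y i) = Qm A y.
Proof.
rewrite /Fm /Qm mxE.
under eq_bigr => j _ do rewrite !mxE big_distrl /=.
rewrite exchange_big /=; apply: eq_bigr => i _; apply: eq_bigr => j _.
by rewrite !mxE.
Qed.

Lemma sq_le_sum (y : 'I_d -> R) i : y i ^+ 2 <= \sum_k y k ^+ 2.
Proof.
by rewrite (bigD1 i) //= lerDl sumr_ge0 // => k _; rewrite sqr_ge0.
Qed.

Lemma Q_le (M : 'M[R]_d) y : Qm M y <= (\sum_i \sum_j `|M i j|) * \sum_k y k ^+ 2.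
Proof.
rewrite /Qm mulr_suml; apply: ler_sum => i _; rewrite mulr_suml; apply: ler_sum => j _.
have hi := sq_le_sum y i; have hj := sq_le_sum y j.
set s := \sum_k y k ^+ 2 in hi hj *.
have hn : `|y i| * `|y j| <= s.
  have := sqr_normr (y i); have := sqr_normr (y j).
  have := normr_ge0 (y i); have := normr_ge0 (y j).
  nra.
apply: (le_trans (ler_norm _)); rewrite !normrM mulrAC mulrC.
by apply: ler_wpM2l.
Qed.

Lemma coercive A : posdefmx A ->
  exists2 b : R, 0 < b & forall y, \sum_i y i ^+ 2 <= b * Qm A y.
Proof.
move=> [/symP hA hp].
have hnn : forall w, 0 <= Fm A w w.
  move=> w; have [->|wn0] := eqVneq w 0; first by rewrite F0r.
  exact/ltW/hp.
have Au : A \in unitmx.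
  rewrite unitmxE unitfE; apply/negP => /det0P [v vn0 vA].
  have := hp v^T; rewrite trmx_eq0 vn0 /Fm trmxK vA mul0mx mxE => /(_ isT).
  by rewrite Order.POrderTheory.ltxx.
set B := invmx A.
set c := \sum_i \sum_j `|B^T i j|.
have c0 : 0 <= c by rewrite sumr_ge0 // => i _; rewrite sumr_ge0.
exists (1 + c); first by rewrite ltr_wpDr.
move=> y; set Y := \col_i y i; set s := \sum_i y i ^+ 2.
have e1 : Fm A Y (B *m Y) = s.
  rewrite /Fm mulmxA -[_ *m A *m B]mulmxA mulmxV // mulmx1 mxE /s.
  by apply: eq_bigr => i _; rewrite !mxE expr2.
have e2 : Fm A (B *m Y) (B *m Y) = Qm B^T y.
  rewrite -FQ /Fm trmx_mul -!mulmxA [A *m (B *m _)]mulmxA mulmxV // mul1mx.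
  by rewrite !mulmxA.
have := CS Y (B *m Y) hA hnn hp; rewrite e1 e2 FQ => hcs.
have hQ := Q_le B^T y; rewrite -/c -/s in hQ.
have hq0 : 0 <= Qm A y by rewrite -FQ.
have s0 : 0 <= s by rewrite sumr_ge0 // => i _; rewrite sqr_ge0.
have : s ^+ 2 <= Qm A y * (c * s) by apply: (le_trans hcs); rewrite ler_wpM2l.
have [->|sn0] := eqVneq s 0; first by rewrite mulr_ge0 // addr_ge0.
have sp : 0 < s by rewrite lt_def sn0 s0.
move=> h; rewrite -(ler_pM2r sp).
have : 0 <= Qm A y * s by rewrite mulr_ge0.
move: h; rewrite expr2; nra.
Qed.

Lemma Sbound A G (S : 'M[R]_d) e b :
  (forall y, \sum_i y i ^+ 2 <= b * Qm A y) -> 0 <= e <= 1 -> S^T = S ->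
  S *m (G + e%:M) + (G + e%:M)^T *m S = 2%:R *: (S *m A *m S) ->
  forall i j, `|S i j| <= 1 + b ^+ 2 * \sum_k (`|G k j| + 1) ^+ 2.
Proof.
move=> hb /andP [e0 e1] hS heq i j.
have hS' : forall a c, S a c = S c a by move=> a c; rewrite -{1}hS mxE.
set H := G + e%:M.
pose y : 'I_d -> R := fun k => S k j.
have L1 : (S *m H) j j = \sum_k y k * H k j.
  by rewrite mxE; apply: eq_bigr => k _; rewrite hS'.
have L2 : (H^T *m S) j j = \sum_k y k * H k j.
  by rewrite mxE; apply: eq_bigr => k _; rewrite mxE mulrC.
have L3 : (S *m A *m S) j j = Qm A y.
  rewrite mxE /Qm; under eq_bigr => l _ do rewrite mxE big_distrl.
  rewrite exchange_big /=; apply: eq_bigr => k _; apply: eq_bigr => l _.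
  by rewrite (hS' j k).
have key : Qm A y = \sum_k y k * H k j.
  have := congr1 (fun M : 'M[R]_d => M j j) heq; rewrite /= mxE [in RHS]mxE L1 L2 L3.
  by rewrite -mulr2n => h; apply: (@mulfI _ 2%:R); rewrite ?pnatr_eq0 // -h mulr_natl.
have hy := hb y; rewrite key in hy.
set s := \sum_k y k ^+ 2 in hy.
have hs : s <= b ^+ 2 * \sum_k H k j ^+ 2.
  have : b * \sum_k y k * H k j <= \sum_k (y k ^+ 2 / 2%:R + b ^+ 2 * H k j ^+ 2 / 2%:R).
    rewrite mulr_sumr; apply: ler_sum => k _.
    have := sqr_ge0 (y k - b * H k j); nra.
  rewrite big_split /= -!mulr_suml -/s => h.
  rewrite mulr_sumr; nra.
have hH : \sum_k H k j ^+ 2 <= \sum_k (`|G k j| + 1) ^+ 2.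
  apply: ler_sum => k _; rewrite /H !mxE.
  have hk : `|G k j + e *+ (k == j)| <= `|G k j| + 1.
    apply: (le_trans (ler_normD _ _)); rewrite lerD2l.
    by case: (k == j); rewrite ?mulr1n ?mulr0n ?normr0 // ger0_norm.
  rewrite -sqr_normr; have := normr_ge0 (G k j + e *+ (k == j)); nra.
have hi : S i j ^+ 2 <= s by exact: (sq_le_sum y i).
have hb2 : b ^+ 2 * \sum_k H k j ^+ 2 <= b ^+ 2 * \sum_k (`|G k j| + 1) ^+ 2.
  by rewrite ler_wpM2l // sqr_ge0.
have := sqr_normr (S i j); have := normr_ge0 (S i j).
set t := `|S i j|; set K := b ^+ 2 * _.
move: hi hs hb2; rewrite -/K => hi hs hb2 h1 h2.
have : t <= 1 + t ^+ 2 by have := sqr_ge0 (t - 1); nra.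
nra.
Qed.
End S2.

Section S3.
Variable R : realType.

Lemma incr_ge (g : nat -> nat) : increasing_seq g -> forall n, (n <= g n)%N.
Proof.
move=> hg; elim=> [//|n IH]; apply: leq_ltn_trans IH _.
have h : (g n.+1 <= g n)%N = (n.+1 <= n)%N := hg n.+1 n.
by rewrite ltnNge h ltnn.
Qed.

Lemma incr_cvg (g : nat -> nat) : increasing_seq g -> g @ \oo --> \oo.
Proof.
move=> hg; apply/cvgnyPge => A; near=> x.
suff hAx : (A <= x)%N by exact: leq_trans hAx (incr_ge hg x).
near: x; exact: nbhs_infty_ge.
Unshelve. all: end_near. Qed.

Lemma subseq_cvgn (w : nat -> R) (g : nat -> nat) : increasing_seq g -> cvgn w -> cvgn (w \o g).
Proof.
move=> hg cw; apply/cvg_ex; exists (limn w).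
exact: cvg_comp (incr_cvg hg) cw.
Qed.

Lemma extract d (u : nat -> 'M[R]_d) :
  (forall i j, exists K, forall n, `|u n i j| <= K) ->
  exists phi : nat -> nat, increasing_seq phi /\
    forall i j, cvgn (fun n => u (phi n) i j).
Proof.
move=> hK.
have main : forall s : seq ('I_d * 'I_d), exists phi : nat -> nat,
    increasing_seq phi /\ forall p, p \in s -> cvgn (fun n => u (phi n) p.1 p.2); last first.
  have [phi [hphi hc]] := main (enum (@predT ('I_d * 'I_d))).
  by exists phi; split=> // i j; apply: (hc (i, j)); rewrite mem_enum.
elim=> [|p s [phi [hphi hc]]].
  by exists id; split=> // m n.
have [K hKp] := hK p.1 p.2.
have bnd : bounded_fun (fun n => u (phi n) p.1 p.2).
  rewrite /= /bounded_near; near=> M => n _ /=; apply: le_trans (hKp (phi n)) _.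
  by near: M; apply: nbhs_pinfty_ge; rewrite num_real.
have [g hg cg] := bolzano_weierstrass bnd.
exists (phi \o g); split.
  by move=> m n /=; rewrite hphi; exact: hg m n.
move=> q; rewrite inE => /orP [/eqP ->|qs]; first exact: cg.
exact: (subseq_cvgn hg (hc q qs)).
Unshelve. all: end_near. Qed.
End S3.

Section S4.
Variable R : realType.

Lemma cvg_bigsum (I : Type) (r : seq I) (Fs : I -> nat -> R) (a : I -> R) :
  (forall i, Fs i @ \oo --> a i) ->
  (fun n => \sum_(i <- r) Fs i n) @ \oo --> \sum_(i <- r) a i.
Proof.
move=> h; elim: r => [|x r IH].
  have -> : (fun n => \sum_(i <- [::]) Fs i n) = (fun=> 0) by apply: funext => n; rewrite big_nil.
  by rewrite big_nil; exact: cvg_cst.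
rewrite big_cons; under eq_cvg do rewrite big_cons.
exact: cvgD (h x) IH.
Qed.

Definition mcvg m n (M : nat -> 'M[R]_(m, n)) (L : 'M[R]_(m, n)) :=
  forall i j, (fun k => M k i j) @ \oo --> L i j.

Lemma mcvg_cst m n (L : 'M[R]_(m, n)) : mcvg (fun=> L) L.
Proof. by move=> i j; exact: cvg_cst. Qed.

Lemma mcvgD m n (M N : nat -> 'M[R]_(m, n)) L1 L2 :
  mcvg M L1 -> mcvg N L2 -> mcvg (fun k => M k + N k) (L1 + L2).
Proof.
move=> h1 h2 i j; rewrite mxE.
under eq_cvg do rewrite mxE.
exact: cvgD (h1 i j) (h2 i j).
Qed.

Lemma mcvgN m n (M : nat -> 'M[R]_(m, n)) L :
  mcvg M L -> mcvg (fun k => - M k) (- L).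
Proof.
move=> h i j; rewrite mxE.
under eq_cvg do rewrite mxE.
exact: cvgN (h i j).
Qed.

Lemma mcvgZ m n (a : nat -> R) (a0 : R) (M : nat -> 'M[R]_(m, n)) L :
  a @ \oo --> a0 -> mcvg M L -> mcvg (fun k => a k *: M k) (a0 *: L).
Proof.
move=> ha h i j; rewrite mxE.
under eq_cvg do rewrite mxE.
exact: cvgM ha (h i j).
Qed.

Lemma mcvgM m n p (M : nat -> 'M[R]_(m, n)) (N : nat -> 'M[R]_(n, p)) L1 L2 :
  mcvg M L1 -> mcvg N L2 -> mcvg (fun k => M k *m N k) (L1 *m L2).
Proof.
move=> h1 h2 i j; rewrite mxE.
have -> : (fun k => (M k *m N k) i j) = (fun k => \sum_l (M k i l * N k l j)).
  by apply: funext => k; rewrite mxE.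
apply: (@cvg_bigsum _ _ (fun l k => M k i l * N k l j)) => l.
exact: cvgM (h1 i l) (h2 l j).
Qed.

Lemma mcvg_tr n (M : nat -> 'M[R]_n) L :
  mcvg M L -> (fun k => \tr (M k)) @ \oo --> \tr L.
Proof.
move=> h; exact: (@cvg_bigsum _ _ (fun i k => M k i i)).
Qed.
End S4.

Unset Implicit Arguments.

Theorem theorem4p9 (R : realType) (d : nat) (hd : (2 <= d)%N)
  (A G : 'M[R]_d) (hA : posdefmx A) :
  exists S : 'M[R]_d,
    S \is symmetricmx /\
    S *m G + G^T *m S = 2%:R *: (S *m A *m S) /\
    \tr (G - A *m S) = 0.
Proof.
have [b b0 hb] := coercive hA.
have step : forall n : nat, exists p : R * 'M[R]_d,
    [/\ 0 < p.1, p.1 <= n.+1%:R^-1, p.2^T = p.2,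
     p.2 *m (G + p.1%:M) + (G + p.1%:M)^T *m p.2 = 2%:R *: (p.2 *m A *m p.2) &
     \tr (A *m p.2) = \tr (G + p.1%:M)].
  move=> n.
  have hpos : 0 < (n.+1%:R : R)^-1 by rewrite invr_gt0 ltr0Sn.
  have [e [e0 eb hdet]] := good_eps (Mop G) hpos.
  have hdet' : \det (Mop (G + (e / 2%:R)%:M)) != 0.
    rewrite Mop_shift.
    have -> : e / 2%:R *+ 2 = e by rewrite -mulr_natr mulfVK // pnatr_eq0.
    by [].
  have [S [Ss [Se St]]] := lyap_sol hA hdet'.
  exists (e / 2%:R, S); split => //=.
  - by rewrite divr_gt0 // ltr0n.
  - apply: le_trans eb; rewrite ler_pdivrMr ?ltr0n // ler_peMr ?ltW //.
    by rewrite ?ltr1n ?ler1n.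
  - by apply/symP.
case: (choice step) => f hf.
pose e_ := fun n => (f n).1.
pose S_ := fun n => (f n).2.
have hbnd : forall i j, exists K, forall n, `|S_ n i j| <= K.
  move=> i j; exists (1 + b ^+ 2 * \sum_k (`|G k j| + 1) ^+ 2) => n.
  have [h0 h1 h2 h3 _] := hf n.
  apply: (Sbound hb _ h2 h3).
  rewrite (ltW h0) /=; apply: le_trans h1 _.
  by rewrite invr_le1 ?ler1n ?unitfE ?pnatr_eq0 // ltr0n.
have [phi [hphi hc]] := extract hbnd.
have e0 : e_ @ \oo --> 0.
  apply: (@squeeze_cvgr _ _ _ _ (fun=> 0) harmonic).
  - by near=> n; have [h0 h1 _ _ _] := hf n; rewrite (ltW h0) h1.
  - exact: cvg_cst.
  - exact: cvg_harmonic.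
have ep0 : (e_ \o phi) @ \oo --> 0 by exact: cvg_comp (incr_cvg hphi) e0.
pose sig := \matrix_(i, j) limn (fun n => S_ (phi n) i j).
have hS : mcvg (fun n => S_ (phi n)) sig.
  by move=> i j; rewrite mxE; exact: (hc i j).
exists sig; split.
  apply/symP; apply/matrixP => i j; rewrite !mxE; congr (limn _).
  apply: funext => n; have [_ _ h2 _ _] := hf (phi n).
  by rewrite /S_ -[in LHS]h2 mxE.
split.
  set D := sig *m G + G^T *m sig - 2%:R *: (sig *m A *m sig).
  suff : D = 0 by move/eqP; rewrite subr_eq0 => /eqP.
  have h1 : mcvg (fun n => S_ (phi n) *m G + G^T *m S_ (phi n)
       - 2%:R *: (S_ (phi n) *m A *m S_ (phi n))) D.
    rewrite /D; apply: mcvgD.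
      apply: mcvgD; first exact: (mcvgM hS (mcvg_cst (L:=G))).
      exact: (mcvgM (mcvg_cst (L:=G^T)) hS).
    apply: mcvgN; apply: mcvgZ; first exact: cvg_cst.
    exact: (mcvgM (mcvgM hS (mcvg_cst (L:=A))) hS).
  have h2 : mcvg (fun n => S_ (phi n) *m G + G^T *m S_ (phi n)
       - 2%:R *: (S_ (phi n) *m A *m S_ (phi n))) 0.
    have -> : (fun n => S_ (phi n) *m G + G^T *m S_ (phi n)
       - 2%:R *: (S_ (phi n) *m A *m S_ (phi n))) =
       (fun n => (- (e_ (phi n) *+ 2)) *: S_ (phi n)).
      apply: funext => n; have [_ _ _ h3 _] := hf (phi n).
      rewrite -/(S_ _) -/(e_ _) in h3; rewrite -h3.
      have -> : (G + (e_ (phi n))%:M)^T = G^T + (e_ (phi n))%:M.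
        by rewrite linearD /= tr_scalar_mx.
      rewrite mulmxDr mulmxDl mul_mx_scalar mul_scalar_mx.
      apply/matrixP => i j; rewrite !mxE; ring.
    have -> : (0 : 'M[R]_d) = (- (0 *+ 2)) *: sig by rewrite mul0rn oppr0 scale0r.
    apply: mcvgZ hS; apply: cvgN; exact: cvgMn ep0.
  apply/matrixP => i j.
  by apply: (cvg_unique _ (h1 i j) (h2 i j)).
have t1 : (fun n => \tr (G - A *m S_ (phi n))) @ \oo --> \tr (G - A *m sig).
  apply: mcvg_tr; apply: mcvgD; first exact: mcvg_cst.
  by apply: mcvgN; apply: mcvgM (mcvg_cst (L:=A)) hS.
have t2 : (fun n => \tr (G - A *m S_ (phi n))) @ \oo --> 0.
  have -> : (fun n => \tr (G - A *m S_ (phi n))) = (fun n => - (e_ (phi n) *+ d)).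
    apply: funext => n; have [_ _ _ _ h4] := hf (phi n).
    rewrite -/(S_ _) -/(e_ _) in h4.
    by rewrite (raddfB (@mxtrace _ d)) /= h4 mxtraceD mxtrace_scalar opprD addrA subrr add0r.
  rewrite -(oppr0 R) -(mul0rn R d); apply: cvgN; exact: cvgMn ep0.
exact: cvg_unique t1 t2.
Unshelve. all: end_near. Qed.
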